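(* Let $p$ be a prime and $\psi\in\mathbb{C}_p(z)$ a nonconstant rational map, and let $x\in\mathbb{C}_p\setminus\mathrm{Crit}(\psi)$. Let $D\subset\mathbb{C}_p$ be an open disk containing $x$ such that $D\cap\mathrm{Crit}(\psi)=\emptyset$ and $\infty\notin\psi(D)$. Then $$|\psi'(x)|\ge\frac{p^{-\delta_{\max}d'}\,\mathrm{diam}(\psi(D))}{p^{-\delta_{\max}}\,\mathrm{diam}(D)},$$ where $\delta_{\max}=\frac{1}{p-1}$ and $d'\ge1$ is the degree of $\psi$ on $D$.
   Context: $\mathbb{C}_p$ is the completion of an algebraic closure of $\mathbb{Q}_p$ with its non-archimedean absolute value $|\cdot|$; disks and diameters are with respect to $|\cdot|$. $\mathrm{Crit}(\psi)$ is the set of critical points of $\psi$ in $\mathbb{P}^1_{\mathbb{C}_p}$. The degree of $\psi$ on $D$ is the number of preimages in $D$, counted with multiplicity, of a point of $\psi(D)$. *)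

(* Defs.v *)
From HB Require Import structures.
From mathcomp Require Import all_boot all_order all_algebra.
From mathcomp Require Import all_classical all_reals all_analysis.
Set Implicit Arguments. Unset Strict Implicit. Unset Printing Implicit Defensive.
Import Order.TTheory GRing.Theory Num.Theory.
Local Open Scope ring_scope.
Local Open Scope classical_set_scope.

(* A "C_p-like" field: an algebraically closed field K with a
   non-archimedean absolute value v : K -> R, complete for v, normalized by
   |p| = 1/p, with value group contained in p^Q.  (C_p is such a field.) *)
Definition Cp_like (R : realType) (K : closedFieldType) (p : nat)
    (v : K -> R) : Prop :=
  [/\ prime p,
      [/\ forall x, 0 <= v x,
      forall x, v x = 0 <-> x = 0,
      forall x y, v (x * y) = v x * v y,
      forall x y, v (x + y) <= Num.max (v x) (v y) &
      v (p%:R) = (p%:R)^-1],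
          forall x, x != 0 -> exists (m : int) (n : nat),
              (0 < n)%N /\ v x ^+ n = (p%:R : R) ^ m &
          forall u : nat -> K,
            (forall e : R, 0 < e -> exists N, forall m n,
                (N <= m)%N -> (N <= n)%N -> v (u m - u n) < e) ->
            exists l, forall e : R, 0 < e -> exists N, forall n,
                (N <= n)%N -> v (u n - l) < e].

Section RatMap.
Variables (R : realType) (K : closedFieldType).

(* The rational map psi = P/Q (P, Q coprime, Q != 0). *)
Definition rat_eval (P Q : {poly K}) (z : K) : K := P.[z] / Q.[z].

Definition rat_deriv (P Q : {poly K}) (z : K) : K :=
  (P^`().[z] * Q.[z] - P.[z] * Q^`().[z]) / (Q.[z] ^+ 2).

(* finite critical points of psi = P/Q: non-poles where psi' vanishes,
   and poles of order >= 2 *)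
Definition rat_crit (P Q : {poly K}) (z : K) : Prop :=
  (Q.[z] != 0 /\ rat_deriv P Q z = 0) \/ (Q.[z] = 0 /\ root Q^`() z).

Definition roots_mult (f : {poly K}) : seq K :=
  proj1_sig (closed_field_poly_normal f).

Definition preimage_count (P Q : {poly K}) (D : set K) (y : K) : nat :=
  count (fun z => `[< D z >]) (roots_mult (P - y *: Q)).

Definition open_disk (v : K -> R) (a : K) (r : R) : set K :=
  [set z | v (z - a) < r].

Definition diam (v : K -> R) (S : set K) : R :=
  sup [set d | exists z w, S z /\ S w /\ d = v (z - w)].

End RatMap.

(* Main.v *)
Require Import Defs.
From HB Require Import structures.
From mathcomp Require Import all_boot all_order all_algebra.
From mathcomp Require Import all_classical all_reals all_analysis.
From mathcomp Require Import ring lra zify.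
Import Order.TTheory GRing.Theory Num.Theory.
Local Open Scope ring_scope.
Set Implicit Arguments. Unset Strict Implicit.

Section Val.
Variables (R : realFieldType) (K : closedFieldType) (v : K -> R).
Hypothesis v_ge0 : forall x, 0 <= v x.
Hypothesis v_eq0 : forall x, v x = 0 <-> x = 0.
Hypothesis vM : forall x y, v (x * y) = v x * v y.
Hypothesis vD : forall x y, v (x + y) <= Num.max (v x) (v y).

Lemma v0 : v 0 = 0. Proof. by apply/v_eq0. Qed.

Lemma v_neq0 x : x != 0 -> 0 < v x.
Proof. move=> hx; rewrite lt_neqAle v_ge0 andbT eq_sym; apply/eqP => /v_eq0 h; by rewrite h eqxx in hx. Qed.

Lemma v1 : v 1 = 1.
Proof.
have h : v 1 = v 1 * v 1 by rewrite -vM mulr1.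
have n0 : v 1 != 0 by apply/eqP => /v_eq0 /eqP; rewrite oner_eq0.
by apply: (mulfI n0); rewrite -h mulr1.
Qed.

Lemma vN x : v (- x) = v x.
Proof.
have h1 : v (-1) * v (-1) = 1 by rewrite -vM mulrNN mulr1 v1.
have h2 : v (-1) = 1.
  have := v_ge0 (-1); move: h1; set a := v (-1) => h1 ha.
  have e : (a - 1) * (a + 1) = a * a - 1 by ring.
  have : (a - 1) * (a + 1) = 0 by rewrite e h1 subrr.
  move/eqP; rewrite mulf_eq0 => /orP [/eqP h|/eqP h].
    by apply/eqP; rewrite -subr_eq0 h.
  have : a + 1 > 0 by lra.
  by rewrite h ltxx.
by rewrite -mulN1r vM h2 mul1r.
Qed.

Lemma vB x y : v (x - y) = v (y - x).
Proof. by rewrite -vN opprB. Qed.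

Lemma vV x : v (x^-1) = (v x)^-1.
Proof.
have [->|hx] := eqVneq x 0; first by rewrite invr0 v0 invr0.
have h : v x * v x^-1 = 1 by rewrite -vM mulfV // v1.
have hv : v x != 0 by rewrite gt_eqF // v_neq0.
by rewrite -[RHS]mulr1 -h mulrA mulVf // mul1r.
Qed.

Lemma vX x n : v (x ^+ n) = v x ^+ n.
Proof. elim: n => [|n IH]; first by rewrite !expr0 v1. by rewrite !exprS vM IH. Qed.

Lemma vD_cases x y : v (x + y) <= v x \/ v (x + y) <= v y.
Proof. have := vD x y; rewrite le_max => /orP [] h; [left|right] => //. Qed.

Lemma vDl x y : v y < v x -> v (x + y) = v x.
Proof.
move=> hlt; apply/eqP; rewrite eq_le; apply/andP; split.
  by case: (vD_cases x y) => // h; apply: (le_trans h); apply: ltW.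
have e : x = (x + y) + (- y) by rewrite addrK.
case: (vD_cases (x + y) (- y)); rewrite -e // vN => h.
by have := lt_le_trans hlt h; rewrite ltxx.
Qed.

Lemma vsum_le (I : Type) (r : seq I) (P : pred I) (F : I -> K) (w c : R) :
  0 <= w -> 0 <= c -> (forall i, P i -> v (F i) * w <= c) ->
  v (\sum_(i <- r | P i) F i) * w <= c.
Proof.
move=> hw hc h; apply: (big_ind (fun s => v s * w <= c)) => //.
  by rewrite v0 mul0r.
move=> a b ha hb; case: (vD_cases a b) => hh.
  by apply: le_trans ha; apply: ler_wpM2r.
by apply: le_trans hb; apply: ler_wpM2r.
Qed.

Lemma vsum_lt (I : Type) (r : seq I) (P : pred I) (F : I -> K) (w c : R) :
  0 <= w -> 0 < c -> (forall i, P i -> v (F i) * w < c) ->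
  v (\sum_(i <- r | P i) F i) * w < c.
Proof.
move=> hw hc h; apply: (big_ind (fun s => v s * w < c)) => //.
  by rewrite v0 mul0r.
move=> a b ha hb; case: (vD_cases a b) => hh.
  by apply: le_lt_trans ha; apply: ler_wpM2r.
by apply: le_lt_trans hb; apply: ler_wpM2r.
Qed.

Lemma vnat n : v n%:R <= 1.
Proof.
elim: n => [|n IH]; first by rewrite v0.
rewrite -addn1 natrD; case: (vD_cases n%:R 1) => h; apply: (le_trans h) => //.
by rewrite v1.
Qed.


Definition wt (rho : R) (A : {poly K}) n := v A`_n * rho ^+ n.
Definition Dom (rho : R) N (A : {poly K}) :=
  [/\ A`_N != 0, forall n, wt rho A n <= wt rho A N &
      forall n, (N < n)%N -> wt rho A n < wt rho A N].

Lemma wt_ge0 rho (A : {poly K}) n : 0 <= rho -> 0 <= wt rho A n.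
Proof. by move=> h; rewrite /wt mulr_ge0 // exprn_ge0. Qed.

Lemma wt_gt0 rho (A : {poly K}) n : 0 < rho -> A`_n != 0 -> 0 < wt rho A n.
Proof. by move=> h hA; rewrite /wt mulr_gt0 ?v_neq0 // exprn_gt0. Qed.

Lemma mul_lt_le (x X y Y : R) : 0 <= x -> x < X -> 0 <= y -> y <= Y -> 0 < Y -> x * y < X * Y.
Proof. move=> hx hxX hy hyY hY; apply: le_lt_trans (_ : x * Y < X * Y); [exact: ler_wpM2l | by rewrite ltr_pM2r]. Qed.

Lemma mul_le_lt (x X y Y : R) : 0 <= x -> x <= X -> 0 <= y -> y < Y -> 0 < X -> x * y < X * Y.
Proof. move=> hx hxX hy hyY hX; rewrite mulrC [X * _]mulrC; exact: mul_lt_le. Qed.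

Lemma term_wt rho (A B : {poly K}) i j : (j <= i)%N ->
  v (A`_j * B`_(i - j)) * rho ^+ i = wt rho A j * wt rho B (i - j).
Proof. by move=> hji; rewrite vM /wt -[in rho ^+ i](subnKC hji) exprD mulrACA. Qed.

Lemma DomM rho N M (A B : {poly K}) : 0 < rho -> Dom rho N A -> Dom rho M B ->
  Dom rho (N + M) (A * B) /\ v (A * B)`_(N + M) = v A`_N * v B`_M.
Proof.
move=> hr [hA0 hAle hAlt] [hB0 hBle hBlt].
have hr0 : 0 <= rho by exact: ltW.
set c := wt rho A N * wt rho B M.
have cpos : 0 < c by rewrite mulr_gt0 // wt_gt0.
have tle : forall i (j : 'I_i.+1), v (A`_j * B`_(i - j)) * rho ^+ i <= c.
  move=> i j; rewrite term_wt; last by rewrite -ltnS.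
  by apply: ler_pM; rewrite ?wt_ge0.
have tlt : forall i (j : 'I_i.+1), ((N < j) || (M < i - j))%N ->
    v (A`_j * B`_(i - j)) * rho ^+ i < c.
  move=> i j /orP [h|h]; (rewrite term_wt; last by rewrite -ltnS).
    by apply: mul_lt_le; rewrite ?wt_ge0 ?hAlt ?hBle ?wt_gt0.
  by apply: mul_le_lt; rewrite ?wt_ge0 ?hBlt ?hAle ?wt_gt0.
have hN : (N < (N + M).+1)%N by rewrite ltnS leq_addr.
have hv : v (A * B)`_(N + M) = v A`_N * v B`_M.
  rewrite coefM (bigD1 (Ordinal hN)) //= vDl; first by rewrite vM addKn.
  have hpos : 0 < rho ^+ (N + M) by rewrite exprn_gt0.
  rewrite -(ltr_pM2r hpos) (term_wt _ _ _ (leq_addr _ _)) addKn -/c.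
  apply: vsum_lt => //; first exact: ltW.
  move=> j hj; apply: tlt; move: hj; rewrite -val_eqE /= => hj.
  case: (ltngtP N j) => //= hjN; last by rewrite -hjN eqxx in hj.
  by rewrite ltn_subRL ltn_add2r.
have hwt : wt rho (A * B) (N + M) = c by rewrite /wt hv exprD mulrACA.
split => //; split.
- by apply/eqP => h; move: hv; rewrite h v0 => /esym/eqP; rewrite mulf_eq0 !gt_eqF ?v_neq0.
- move=> n; rewrite hwt /wt coefM; apply: vsum_le; [exact: exprn_ge0 | exact: ltW |].
  by move=> j _; apply: tle.
- move=> n hn; rewrite hwt /wt coefM; apply: vsum_lt; [exact: exprn_ge0 | done |].
  move=> j _; apply: tlt; have := ltn_ord j; lia.
Qed.




Lemma Dom_scale rho N (c : K) (A : {poly K}) : c != 0 -> Dom rho N A -> Dom rho N (c *: A).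
Proof.
move=> hc [h0 hle hlt]; have vc : 0 < v c by exact: v_neq0.
split; first by rewrite coefZ mulf_neq0.
  by move=> n; rewrite /wt !coefZ !vM -!mulrA ler_pM2l // hle.
by move=> n hn; rewrite /wt !coefZ !vM -!mulrA ltr_pM2l // hlt.
Qed.

Lemma coefXsubC (e : K) n : ('X - e%:P)`_n = (n == 1)%:R - (n == 0)%:R * e.
Proof. by rewrite coefB coefX coefC; case: n => [|[|n]] //=; rewrite ?mul1r ?mul0r. Qed.

Ltac simpc := rewrite ?mul1r ?mul0r ?sub0r ?subr0 ?vN ?v0 ?v1 ?expr0 ?expr1 ?mulr1 ?mul1r ?mul0r.

Lemma Dom_lin_in rho (e : K) : 0 < rho -> v e <= rho -> Dom rho 1 ('X - e%:P).
Proof.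
move=> hr he; split; first by rewrite coefXsubC /= mul0r subr0 oner_eq0.
  by move=> n; rewrite /wt !coefXsubC; case: n => [|[|n]] /=; simpc; rewrite ?lexx // ?ltW.
move=> n hn; rewrite /wt !coefXsubC.
by case: n hn => [|[|n]] //= _; simpc.
Qed.

Lemma Dom_lin_out rho (e : K) : 0 <= rho -> rho < v e -> Dom rho 0 ('X - e%:P).
Proof.
move=> hr he; have e0 : e != 0 by apply/eqP => h; move: he; rewrite h v0; case: ltgtP hr.
split; first by rewrite coefXsubC /= mul1r sub0r oppr_eq0.
  by move=> n; rewrite /wt !coefXsubC; case: n => [|[|n]] /=; simpc; rewrite ?lexx ?v_ge0 // ltW.
move=> n hn; rewrite /wt !coefXsubC.
by case: n hn => [|[|n]] //= _; simpc; apply: le_lt_trans he.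
Qed.

Lemma Dom1 rho : Dom rho 0 (1 : {poly K}).
Proof.
split; first by rewrite coef1 oner_eq0.
  by move=> n; rewrite /wt !coef1 /=; case: n => [|n] //=; rewrite v0 mul0r v1 mulr1.
by move=> n hn; rewrite /wt !coef1 /=; case: n hn => [|n] //= _; rewrite v0 mul0r v1 mulr1.
Qed.

Lemma Dom_prod rho (s : seq K) (P : pred K) (g : K -> {poly K}) (Nf : K -> nat) :
  0 < rho -> (forall z, z \in s -> P z -> Dom rho (Nf z) (g z)) ->
  Dom rho (\sum_(z <- s | P z) Nf z)%N (\prod_(z <- s | P z) g z).
Proof.
move=> hr; elim: s => [|z s IH] h; first by rewrite !big_nil; exact: Dom1.
have IH' : Dom rho (\sum_(z <- s | P z) Nf z)%N (\prod_(z <- s | P z) g z).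
  by apply: IH => w hw; apply: h; rewrite inE hw orbT.
rewrite !big_cons.
case: (P z) (h z (mem_head z s)) => // hz.
exact: (DomM hr (hz isT) IH').1.
Qed.


Definition sm rho (A : {poly K}) := forall n, wt rho A n < 1.

Lemma smM rho (A B : {poly K}) : 0 <= rho -> sm rho A -> sm rho B -> sm rho (A * B).
Proof.
move=> hr hA hB n; rewrite /wt coefM; apply: vsum_lt; [exact: exprn_ge0 | exact: ltr01 |].
move=> j _; rewrite term_wt; last by rewrite -ltnS.
apply: le_lt_trans (hA j); rewrite -[X in _ <= X]mulr1.
by apply: ler_wpM2l; [exact: wt_ge0 | exact: ltW].
Qed.

Lemma smD rho (A B : {poly K}) : 0 <= rho -> sm rho A -> sm rho B -> sm rho (A + B).
Proof.
move=> hr0 hA hB n; rewrite /wt coefD.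
have hr : 0 <= rho ^+ n by exact: exprn_ge0.
case: (vD_cases A`_n B`_n) => h.
  by apply: le_lt_trans (hA n); apply: ler_wpM2r.
by apply: le_lt_trans (hB n); apply: ler_wpM2r.
Qed.

Lemma sm0 rho : sm rho (0 : {poly K}).
Proof. by move=> n; rewrite /wt coef0 v0 mul0r ltr01. Qed.

Lemma sm_sum rho n (F : nat -> {poly K}) : 0 <= rho -> (forall i, sm rho (F i)) ->
  sm rho (\sum_(i < n) F i).
Proof.
move=> hr h; apply: (big_ind (sm rho)); [exact: sm0 | by move=> *; apply: smD | by move=> *].
Qed.

Lemma smX rho (A : {poly K}) k : 0 <= rho -> sm rho A -> sm rho (A ^+ k.+1).
Proof.
move=> hr hA; elim: k => [|k IH]; first by rewrite expr1.
by rewrite exprS; apply: smM.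
Qed.

Definition low n (A : {poly K}) := forall i, (i < n)%N -> A`_i = 0.

Lemma lowMl n (A E : {poly K}) : low n E -> low n (A * E).
Proof.
move=> hE i hi; rewrite coefM big1 // => j _; rewrite hE ?mulr0 //.
by apply: leq_ltn_trans hi; apply: leq_subr.
Qed.

Lemma lowMr n (A E : {poly K}) : low n E -> low n (E * A).
Proof. by rewrite mulrC; apply: lowMl. Qed.

Lemma lowD n (A B : {poly K}) : low n A -> low n B -> low n (A + B).
Proof. by move=> hA hB i hi; rewrite coefD hA ?hB ?addr0. Qed.

Lemma lowN n (A : {poly K}) : low n A -> low n (- A).
Proof. by move=> hA i hi; rewrite coefN hA ?oppr0. Qed.

Lemma lowW n m (A : {poly K}) : (m <= n)%N -> low n A -> low m A.
Proof. by move=> hmn hA i hi; apply: hA; apply: leq_trans hmn. Qed.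

Lemma low_deriv n (A : {poly K}) : low n.+1 A -> low n A^`().
Proof. by move=> hA i hi; rewrite coef_deriv hA ?mul0rn. Qed.

Lemma lowX (A : {poly K}) k : A`_0 = 0 -> low k (A ^+ k).
Proof.
move=> h0; elim: k => [|k IH] i hi //.
rewrite exprS coefM big1 // => j _.
case: j => [[|j]] hj /=; first by rewrite h0 mul0r.
by rewrite IH ?mulr0 //; move: hi hj; lia.
Qed.

Lemma key_identity (F Q u : {poly K}) :
  let E := u * Q - 1 in
  (F^`() * Q - F * Q^`()) * (u * u) - (F * u)^`() =
    F^`() * u * E - F * u * E^`() + F * u^`() * E.
Proof.
move=> E; have hE : E^`() = u^`() * Q + u * Q^`().
  by rewrite /E derivB derivM -polyC1 derivC subr0 addrC.
rewrite hE /E derivM; ring.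
Qed.

Lemma low_key (F Q u : {poly K}) n : low n.+1 (u * Q - 1) ->
  low n ((F^`() * Q - F * Q^`()) * (u * u) - (F * u)^`()).
Proof.
move=> hE; rewrite key_identity.
have h1 : low n (u * Q - 1) by apply: lowW hE.
have h2 : low n (u * Q - 1)^`() by apply: low_deriv.
by apply: lowD; [apply: lowD; [apply: lowMl h1 | apply: lowN; apply: lowMl h2] | apply: lowMl h1].
Qed.



Lemma unit_inv rho (Q : {poly K}) n : 0 < rho -> Dom rho 0 Q ->
  exists u : {poly K}, [/\ Dom rho 0 u, v u`_0 = (v Q`_0)^-1 & low n (u * Q - 1)].
Proof.
move=> hr [hq0 hQle hQlt]; have hr0 : 0 <= rho by exact: ltW.
set q0 := Q`_0 in hq0 hQle hQlt *.
have vq0 : 0 < v q0 by exact: v_neq0.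
set B := 1 - q0^-1 *: Q.
have B0 : B`_0 = 0 by rewrite /B coefB coef1 coefZ mulVf // subrr.
have smB : sm rho B.
  case=> [|m]; first by rewrite /wt B0 v0 mul0r ltr01.
  rewrite /wt /B coefB coef1 /= sub0r coefZ vN vM vV -mulrA mulrC ltr_pdivrMr //.
  by rewrite mul1r; have := hQlt m.+1 isT; rewrite /wt expr0 mulr1.
set S := \sum_(i < n) B ^+ i.+1.
have smS : sm rho S by apply: (@sm_sum rho n (fun i => B ^+ i.+1)) => // i; apply: smX.
have hsum : \sum_(i < n.+1) B ^+ i = 1 + S by rewrite big_ord_recl expr0.
exists (q0^-1 *: (1 + S)); split.
- apply: Dom_scale; first by rewrite invr_eq0.
  have vS0 : v S`_0 < 1 by have := smS 0; rewrite /wt expr0 mulr1.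
  have v10 : v (1 + S)`_0 = 1 by rewrite coefD coef1 /= vDl v1.
  have w0 : wt rho (1 + S) 0 = 1 by rewrite /wt v10 expr0 mulr1.
  split; first by apply/eqP => h; move: v10; rewrite h v0 => /eqP; rewrite eq_sym oner_eq0.
    by case=> [|m]; rewrite w0 ?lexx //; apply: ltW; rewrite /wt coefD coef1 /= add0r; apply: smS.
  by case=> [|m] // _; rewrite w0 /wt coefD coef1 /= add0r; apply: smS.
- by rewrite coefZ vM vV coefD coef1 /= vDl ?v1 ?mulr1 //; have := smS 0; rewrite /wt expr0 mulr1.
- have e : q0^-1 *: (1 + S) * Q - 1 = - B ^+ n.+1.
    rewrite -hsum -scalerAl scalerAr.
    have -> : q0^-1 *: Q = 1 - B by rewrite /B opprB addrC subrK.
    have := subrX1 B n.+1 => h.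
    have h' : (\sum_(i < n.+1) B ^+ i) * (1 - B) = - (B ^+ n.+1 - 1) by rewrite h; ring.
    by rewrite h'; ring.
  rewrite e; apply: (@lowW n.+1); first exact: leqnSn.
  by apply: lowN; apply: lowX.
Qed.


Definition sh (x : K) (A : {poly K}) := A \Po ('X + x%:P).

Lemma sh_horner x (A : {poly K}) w : (sh x A).[w - x] = A.[w].
Proof. by rewrite /sh horner_comp !hornerE subrK. Qed.

Lemma sh_coef0 x (A : {poly K}) : (sh x A)`_0 = A.[x].
Proof. by rewrite -horner_coef0 /sh horner_comp !hornerE ?add0r. Qed.

Lemma sh_deriv x (A : {poly K}) : (sh x A)^`() = sh x A^`().
Proof. by rewrite /sh deriv_comp derivD derivX derivC addr0 mulr1. Qed.

Lemma shM x (A B : {poly K}) : sh x (A * B) = sh x A * sh x B.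
Proof. exact: comp_polyM. Qed.

Lemma shB x (A B : {poly K}) : sh x (A - B) = sh x A - sh x B.
Proof. exact: comp_polyB. Qed.

Lemma sh_prod x (s : seq K) (c : K) :
  sh x (c *: \prod_(z <- s) ('X - z%:P)) = c *: \prod_(z <- s) ('X - (z - x)%:P).
Proof.
rewrite /sh comp_polyZ; congr (_ *: _).
elim: s => [|z s IH]; first by rewrite !big_nil comp_polyC.
rewrite !big_cons comp_polyM IH comp_polyB comp_polyX comp_polyC polyCB; congr (_ * _).
by rewrite opprB addrA addrAC.
Qed.

Lemma sum_nat_bool (s : seq K) (P : pred K) : (\sum_(z <- s) (P z : nat))%N = count P s.
Proof. by elim: s => [|z s IH]; rewrite ?big_nil ?big_cons //= IH. Qed.

Lemma Dom_sh rho x (A : {poly K}) (P : pred K) :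
  0 < rho -> A != 0 ->
  (forall z, root A z -> P z -> v (z - x) <= rho) ->
  (forall z, root A z -> ~~ P z -> rho < v (z - x)) ->
  Dom rho (count P (proj1_sig (closed_field_poly_normal A))) (sh x A).
Proof.
move=> hr hA hin hout.
case: (closed_field_poly_normal A) => s hs /=.
have hroot : forall z, z \in s -> root A z.
  by move=> z hz; rewrite hs rootZ ?lead_coef_eq0 // root_prod_XsubC.
rewrite [in sh x A]hs sh_prod; apply: Dom_scale; first by rewrite lead_coef_eq0.
rewrite -sum_nat_bool.
apply: (@Dom_prod rho s predT (fun z => 'X - (z - x)%:P) (fun z => nat_of_bool (P z))) => //.
move=> z hz _; case hP : (P z) => /=.
  by apply: Dom_lin_in => //; apply: hin; rewrite ?hroot ?hP.
by apply: Dom_lin_out; [exact: ltW | apply: hout; rewrite ?hroot ?hP].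
Qed.

Lemma Dom_eval_le rho N (B : {poly K}) t : 0 <= rho -> Dom rho N B -> v t <= rho ->
  v B.[t] <= wt rho B N.
Proof.
move=> hr [h0 hle hlt] ht; rewrite -[v _]mulr1 horner_coef; apply: vsum_le => //.
  exact: wt_ge0.
move=> i _; rewrite mulr1 vM vX; apply: le_trans (hle i); apply: ler_wpM2l => //.
by apply: lerXn2r; rewrite ?nnegrE ?v_ge0.
Qed.

Lemma Dom0_eval rho (B : {poly K}) t : 0 <= rho -> Dom rho 0 B -> v t <= rho ->
  v B.[t] = v B`_0.
Proof.
move=> hr [h0 hle hlt] ht; rewrite horner_coef.
have hs : (0 < size B)%N by rewrite lt0n size_poly_eq0; apply: contraNneq h0 => ->; rewrite coef0.
rewrite -(prednK hs) big_ord_recl /= expr0 mulr1 vDl //.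
rewrite -[v (\sum_(_ < _) _)]mulr1; apply: vsum_lt => //; first exact: v_neq0.
move=> i _; rewrite mulr1 vM vX.
have := hlt i.+1 isT; rewrite /wt expr0 mulr1 => h; apply: le_lt_trans h.
rewrite /bump /=; apply: ler_wpM2l => //.
by apply: lerXn2r; rewrite ?nnegrE ?v_ge0.
Qed.


Lemma bigmax_props (s : seq K) (Pp : pred K) (f : K -> R) (x0 : R) :
  let m := \big[Num.max/x0]_(z <- s | Pp z) f z in
  [/\ x0 <= m, (forall z, z \in s -> Pp z -> f z <= m) &
      (m = x0 \/ exists z, [/\ z \in s, Pp z & m = f z])].
Proof.
elim: s => [|z s IH] /=; first by rewrite big_nil; split => //; left.
case: IH => [h1 h2 h3]; rewrite big_cons.
set m' := \big[Num.max/x0]_(j <- s | Pp j) f j in h1 h2 h3 *.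
case hz : (Pp z).
  split.
  - by apply: le_trans h1 _; rewrite le_max lexx orbT.
  - move=> y; rewrite inE => /orP [/eqP ->|hy] hP; first by rewrite le_max lexx.
    by apply: le_trans (h2 y hy hP) _; rewrite le_max lexx orbT.
  - rewrite maxEle; case: (f z <= m').
      case: h3 => [->|[y [hy hP ->]]]; [by left | right; exists y; split => //].
      by rewrite inE hy orbT.
    by right; exists z; rewrite inE eqxx.
split => //.
- move=> y; rewrite inE => /orP [/eqP ->|hy] hP; first by rewrite hz in hP.
  exact: h2.
- case: h3 => [->|[y [hy hP ->]]]; [by left | right; exists y; split => //].
  by rewrite inE hy orbT.
Qed.

Lemma far (a x z : K) (r : R) : v (x - a) < r -> r <= v (z - a) -> r <= v (z - x).
Proof.
move=> hx hz.
have e : z - x = (z - a) + (a - x) by rewrite addrA subrK.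
rewrite e vDl //; rewrite vB; exact: lt_le_trans hx hz.
Qed.

Lemma near_disk (a x z : K) (r : R) : v (x - a) < r -> v (z - a) < r -> v (z - x) < r.
Proof.
move=> hx hz.
have e : z - x = (z - a) + (a - x) by rewrite addrA subrK.
by rewrite e; case: (vD_cases (z - a) (a - x)) => h; apply: le_lt_trans h _; rewrite // vB.
Qed.


Lemma core (P Q : {poly K}) (x a : K) (r : R) (Dp : pred K) (d' : nat) :
  (forall z, Dp z = (v (z - a) < r)) -> Dp x -> Q != 0 ->
  P - (P.[x] / Q.[x]) *: Q != 0 ->
  (forall z, Dp z -> Q.[z] != 0) ->
  (forall z, Dp z -> (P^`() * Q - P * Q^`()).[z] != 0) ->
  count Dp (proj1_sig (closed_field_poly_normal (P - (P.[x] / Q.[x]) *: Q))) = d' ->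
  (0 < d')%N ->
  forall w, Dp w ->
  exists rho, (rho = v (w - x) \/ exists z, Dp z /\ rho = v (z - x)) /\
    v (P.[w] / Q.[w] - P.[x] / Q.[x]) * v (d'%:R) <=
      rho * v ((P^`() * Q - P * Q^`()).[x] / Q.[x] ^+ 2).
Proof.
move=> hD hx hQ hF hQD hGD hcount hd w hw.
set y0 := P.[x] / Q.[x] in hF hcount *.
set F := P - y0 *: Q in hF hcount *.
set G := P^`() * Q - P * Q^`() in hGD *.
have hG : G != 0 by apply: contraTneq (hGD x hx) => ->; rewrite horner0 eqxx.
have hGF : G = F^`() * Q - F * Q^`().
  by rewrite /G /F derivB derivZ -!mul_polyC; ring.
move: hcount; case E : (closed_field_poly_normal F) => [sF hsF] /= hcount.
have rootF : forall z, root F z -> z \in sF.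
  by move=> z; rewrite hsF rootZ ?lead_coef_eq0 // root_prod_XsubC.
have hxa : v (x - a) < r by rewrite -hD.
set rho := \big[Num.max/v (w - x)]_(z <- sF | Dp z) v (z - x).
have [rho1 rho2 rho3] := bigmax_props sF Dp (fun z => v (z - x)) (v (w - x)).
rewrite -/rho in rho1 rho2 rho3.
exists rho; split.
  by case: rho3 => [->|[z [_ hz ->]]]; [left | right; exists z].
have rho_lt : rho < r.
  case: rho3 => [->|[z [_ hz ->]]]; apply: (near_disk hxa); by rewrite -hD.
have rho_ge0 : 0 <= rho by apply: le_trans rho1; exact: v_ge0.
have [rho0|rhopos] := eqVneq rho 0.
  have wx : w = x.
    apply/eqP; rewrite -subr_eq0; apply/eqP/v_eq0; apply/eqP; rewrite eq_le v_ge0 andbT.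
    by rewrite -rho0.
  by rewrite wx subrr v0 !mul0r rho0 mul0r.
have hr : 0 < rho by rewrite lt_neqAle eq_sym rhopos rho_ge0.
have DF : Dom rho d' (sh x F).
  have := @Dom_sh rho x F Dp hr hF.
  rewrite E /= hcount; apply.
    by move=> z hz hDz; apply: rho2 => //; apply: rootF.
  move=> z _ hDz; apply: lt_le_trans rho_lt _; apply: (far hxa).
  by rewrite leNgt -hD.
have DQ : Dom rho 0 (sh x Q).
  have := @Dom_sh rho x Q pred0 hr hQ; rewrite count_pred0; apply => // z hz _.
  apply: lt_le_trans rho_lt _; apply: (far hxa); rewrite leNgt -hD.
  by apply: contraL hz => /hQD; rewrite /root.
have DG : Dom rho 0 (sh x G).
  have := @Dom_sh rho x G pred0 hr hG; rewrite count_pred0; apply => // z hz _.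
  apply: lt_le_trans rho_lt _; apply: (far hxa); rewrite leNgt -hD.
  by apply: contraL hz => /hGD; rewrite /root.
have [u [Du vu0 hlow]] := @unit_inv rho (sh x Q) d'.+1 hr DQ.
have [DFu vFu] := DomM hr DF Du.
have [Duu vuu] := DomM hr Du Du.
have [DGuu vGuu] := DomM hr DG Duu.
rewrite addn0 in DFu vFu.
have hcong := @low_key (sh x F) (sh x Q) u d' hlow.
have eG : (sh x F)^`() * sh x Q - sh x F * (sh x Q)^`() = sh x G.
  by rewrite hGF (shB x (F^`() * Q)) !shM !sh_deriv.
rewrite eG in hcong.
have hc : (sh x G * (u * u))`_d'.-1 = (sh x F * u)`_d' *+ d'.
  have hlt : (d'.-1 < d')%N by rewrite ltn_predL.
  have h0 := hcong d'.-1 hlt.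
  by move: h0; rewrite coefB coef_deriv (prednK hd) => /eqP; rewrite subr_eq0 => /eqP.
have hkey : v (sh x F * u)`_d' * v (d'%:R) * rho ^+ d'.-1 <=
    v (sh x G)`_0 * (v u`_0 * v u`_0).
  case: DGuu => _ hle _; have := hle d'.-1.
  have e : (sh x F * u)`_d' *+ d' = (sh x F * u)`_d' * d'%:R by rewrite mulr_natr.
  by rewrite /wt hc e vM vGuu vuu !addn0 expr0 mulr1.
rewrite vFu in hkey.
have hwx : v (w - x) <= rho by [].
have vFw : v F.[w] <= v (sh x F)`_d' * rho ^+ d'.
  by rewrite -(sh_horner x); apply: Dom_eval_le => //; exact: ltW.
have vQw : v Q.[w] = v Q.[x].
  by rewrite -(sh_horner x) (Dom0_eval _ DQ) ?sh_coef0 //; exact: ltW.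
have hQw := hQD w hw; have hQx := hQD x hx.
have eL : P.[w] / Q.[w] - y0 = F.[w] / Q.[w].
  by rewrite /F !hornerE; field.
rewrite eL vM vV vQw.
rewrite sh_coef0 in hkey; rewrite vu0 sh_coef0 in hkey.
rewrite vM vV vX.
set A := v (sh x F)`_d' in vFw hkey *.
set q := v Q.[x] in hkey *.
set g := v G.[x] in hkey *.
set n := v d'%:R in hkey *.
have qpos : 0 < q by exact: v_neq0.
have nge0 : 0 <= n by exact: v_ge0.
have Age0 : 0 <= A by exact: v_ge0.
have rge0 : 0 <= rho ^+ d'.-1 by exact: exprn_ge0.
apply: le_trans (_ : A * rho ^+ d' * q^-1 * n <= _).
  by apply: ler_wpM2r => //; apply: ler_wpM2r => //; rewrite invr_ge0 ltW.
have ed : rho ^+ d' = rho * rho ^+ d'.-1 by rewrite -exprS (prednK hd).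
rewrite ed.
have -> : A * (rho * rho ^+ d'.-1) * q^-1 * n = rho * (A * q^-1 * n * rho ^+ d'.-1) by ring.
apply: ler_wpM2l => //; apply: le_trans hkey _.
by rewrite expr2 invfM lexx.
Qed.

Lemma v_coprime (p m : nat) : prime p -> v (p%:R) = (p%:R)^-1 -> coprime p m -> v (m%:R) = 1.
Proof.
move=> hp vp hc.
have p0 : (0 < p)%N by exact: prime_gt0.
have [a _ ha] := Bezoutl m p0.
rewrite (eqP hc) in ha.
case/dvdnP: ha => c hc'.
have e : (1 : K) = (c * p)%:R + - (a * m)%:R by rewrite -hc' natrD addrK.
have p1 : (1 < p)%N by exact: prime_gt1.
have pinv : (p%:R : R)^-1 < 1 by rewrite invf_lt1 ?ltr1n // ltr0n.
apply/eqP; rewrite eq_le vnat /=.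
case: (vD_cases (c * p)%:R (- (a * m)%:R)); rewrite -e v1.
  rewrite natrM vM vp => h.
  have h2 : v c%:R * (p%:R)^-1 <= (p%:R : R)^-1 by rewrite ler_piMl ?invr_ge0 ?ler0n ?vnat.
  by have := le_trans h h2; rewrite leNgt pinv.
rewrite vN natrM vM => h; apply: le_trans h _; rewrite ler_piMl ?vnat //.
Qed.

Lemma bern (p k : nat) : (1 <= p)%N -> (1 + k * (p - 1) <= p ^ k)%N.
Proof.
move=> hp; elim: k => [|k IH]; first by rewrite expn0.
rewrite expnS; nia.
Qed.

Lemma v_nat_lb (p n : nat) : prime p -> v (p%:R) = (p%:R)^-1 -> (0 < n)%N ->
  exists k, v (n%:R) = ((p%:R : R)^-1) ^+ k /\ (k * (p - 1) <= n - 1)%N.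
Proof.
move=> hp vp hn.
have [m hc hm] := pfactor_coprime hp hn.
exists (logn p n); split.
  by rewrite {1}hm natrM natrX vM vX vp (v_coprime hp vp hc) mul1r.
have h1 : (p ^ logn p n <= n)%N.
  rewrite {2}hm; apply: leq_pmull; rewrite lt0n; apply/eqP => m0.
  by move: hm; rewrite m0 mul0n => h; rewrite h in hn.
have := bern (logn p n) (prime_gt0 hp); lia.
Qed.

End Val.

Unset Implicit Arguments.
Local Open Scope classical_set_scope.

Theorem proposition2p6 (R : realType) (K : closedFieldType) (p : nat)
    (v : K -> R) (P Q : {poly K}) (x a : K) (r : R) (d' : nat) :
  Cp_like p v ->
  Q != 0 -> coprimep P Q -> ~ (exists c : K, P = c *: Q) ->
  ~ rat_crit P Q x ->
  0 < r -> open_disk v a r x ->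
  (forall z, open_disk v a r z -> ~ rat_crit P Q z) ->
  (forall z, open_disk v a r z -> Q.[z] != 0) ->
  (forall y, (rat_eval P Q @` open_disk v a r) y ->
     preimage_count P Q (open_disk v a r) y = d') ->
  (1 <= d')%N ->
  v (rat_deriv P Q x) >=
    ((p%:R : R) `^ (- ((p%:R - 1)^-1 * d'%:R)) *
       diam v (rat_eval P Q @` open_disk v a r)) /
    ((p%:R : R) `^ (- (p%:R - 1)^-1) * diam v (open_disk v a r)).
Proof.
move=> [hp [v_ge0 v_eq0 vM vD vp] _ _] hQ _ hnc _ hr hxD hcrit hQD hdeg hd.
set D := open_disk v a r.
pose Dp : pred K := fun z => v (z - a) < r.
have hDp : forall z, D z -> Dp z by [].
have hxDp : Dp x by [].
set y0 := P.[x] / Q.[x].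
have hF : P - y0 *: Q != 0.
  apply/eqP => h; apply: hnc; exists y0; apply/eqP; rewrite -subr_eq0 h //.
set G := P^`() * Q - P * Q^`().
have hGe : forall z, G.[z] = P^`().[z] * Q.[z] - P.[z] * Q^`().[z].
  by move=> z; rewrite /G !hornerE.
have hGD : forall z, Dp z -> G.[z] != 0.
  move=> z hz; have hQz := hQD z hz; apply/eqP => hG0; apply: (hcrit z hz); left.
  by split => //; rewrite /rat_deriv -hGe hG0 mul0r.
have hcount : count Dp (sval (closed_field_poly_normal (P - y0 *: Q))) = d'.
  have := hdeg y0 (ex_intro2 _ _ x hxD erefl).
  rewrite /preimage_count /roots_mult => <-; apply: eq_count => z.
  by rewrite asboolb.
have hcore := core v_ge0 v_eq0 vM vD (fun z => erefl) hxDp hQ hF (fun z hz => hQD z hz) hGD hcount hd.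

set L := v (rat_deriv P Q x).
have hL : rat_deriv P Q x = G.[x] / Q.[x] ^+ 2 by rewrite /rat_deriv hGe.
have L0 : 0 <= L by exact: v_ge0.
set SD := [set d | exists z w, D z /\ D w /\ d = v (z - w)].
have hSDub : ubound SD r.
  move=> d [z [w [hz [hw ->]]]]; apply: ltW; exact: (near_disk v_ge0 v_eq0 vM vD hw hz).
have hSD : has_sup SD.
  split; last by exists r.
  by exists 0, x, x; split => //; split => //; rewrite subrr v0.
have SDle : forall d, SD d -> d <= diam v D := sup_upper_bound hSD.
set dD := diam v D in SDle *.
have dD0 : 0 <= dD by apply: SDle; exists x, x; rewrite subrr v0.
have [k [vn hk]] := v_nat_lb v_ge0 v_eq0 vM vD hp vp hd.
set n := v d'%:R in vn.
have p1 : (1 < p)%N by exact: prime_gt1.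
have npos : 0 < n by rewrite vn exprn_gt0 // invr_gt0 ltr0n ltnW.
have bound1 : forall w, Dp w -> v (rat_eval P Q w - y0) * n <= dD * L.
  move=> w hw; have [rho [hrho hle]] := hcore w hw.
  rewrite /rat_eval; apply: le_trans hle _; rewrite /L hL; apply: ler_wpM2r; first exact: v_ge0.
  apply: SDle; case: hrho => [->|[z [hz ->]]]; by [exists w, x | exists z, x].

set f := rat_eval P Q.
set Sf := [set d | exists z w, (f @` D) z /\ (f @` D) w /\ d = v (z - w)].
have bound2 : forall d, Sf d -> d * n <= dD * L.
  move=> d [z [w [[z' hz' <-] [[w' hw' <-] ->]]]].
  have e : f z' - f w' = (f z' - y0) + - (f w' - y0) by rewrite opprB addrA subrK.
  rewrite e; case: (vD_cases vD (f z' - y0) (- (f w' - y0))) => h.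
    by apply: le_trans (bound1 z' hz'); apply: ler_wpM2r => //; exact: ltW.
  rewrite (vN v_ge0 v_eq0 vM) in h.
  by apply: le_trans (bound1 w' hw'); apply: ler_wpM2r => //; exact: ltW.
have Sf0 : Sf 0.
  by exists (f x), (f x); split; [exists x|split; [exists x|rewrite subrr v0]].
have hSf : has_sup Sf.
  split; first by exists 0.
  exists (dD * L / n) => d hd'; rewrite ler_pdivlMr //; exact: bound2.
set s := diam v (f @` D).
have s0 : 0 <= s by apply: (sup_upper_bound hSf).
have sle : s * n <= dD * L.
  rewrite -ler_pdivlMr //; apply: ge_sup; first by exists 0.
  by move=> d hd'; rewrite ler_pdivlMr //; exact: bound2.

set A := (p%:R : R) `^ (- (p%:R - 1)^-1).
have p0R : (0 : R) < p%:R by rewrite ltr0n ltnW.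
have hA0 : 0 < A by apply: powR_gt0.
have hAp : A ^+ (p - 1) = (p%:R)^-1.
  rewrite /A -powR_mulrn; last exact: powR_ge0.
  rewrite -powRrM natrB; last exact: ltnW.
  have hp1 : (p%:R : R) - 1 != 0 by rewrite subr_eq0 gt_eqF // ltr1n.
  by rewrite mulNr mulVf // powRN powRr1 // ltW.
have A1 : A <= 1.
  rewrite leNgt; apply/negP; rewrite -(expr_gt1 (n:=(p - 1)%N)) ?subn_gt0 ?(ltW hA0) // hAp => h.
  have : (p%:R : R)^-1 < 1 by rewrite invf_lt1 // ltr1n.
  by rewrite ltNge (ltW h).
have hexp : (p%:R : R) `^ (- ((p%:R - 1)^-1 * d'%:R)) = A ^+ d'.
  by rewrite -mulNr powRrM powR_mulrn //; exact: powR_ge0.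
have hAk : A ^+ (d' - 1) <= n.
  rewrite vn -hAp -exprM; apply: ler_wiXn2l; [exact: ltW | exact: A1 | by rewrite mulnC].
rewrite hexp -/A.
have [->|dDpos] := eqVneq dD 0; first by rewrite mulr0 invr0 mulr0.
have dDp : 0 < dD by rewrite lt_neqAle eq_sym dDpos dD0.
rewrite ler_pdivrMr ?mulr_gt0 //.
have ed : A ^+ d' = A * A ^+ (d' - 1) by rewrite subn1 -exprS prednK.
rewrite ed -mulrA [L * _]mulrCA ler_pM2l //.
apply: le_trans (_ : n * s <= _); first by apply: ler_wpM2r.
by rewrite mulrC [L * _]mulrC.
Qed.
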